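(* Let $R(3,n)$ be a rectangular supergrid graph with $n\ge 2$, let $s,t$ be two distinct vertices of it, and let $w=(1,1)$, $z=(2,1)$. Assume that the following conditions fail: (F1) $n=2$ and $s_x=t_x=2$ (i.e. $\{s,t\}$ is a vertex cut of $R(3,2)$); (F2) either $n=2$ and $\{s,t\}\in\{\{(1,1),(2,1)\},\{(1,1),(2,2)\},\{(2,1),(1,2)\}\}$, or $n\ge 3$ and $\{s,t\}=\{w,z\}$. If $s=z$ or $t=z$, then there exists a Hamiltonian $(s,t)$-path $Q$ of $R(3,n)$ such that the edge $(w,z)$ belongs to $Q$.
   Context: The rectangular supergrid graph $R(m,n)$ has vertex set $\{(x,y)\in\mathbb{Z}^2:1\le x\le m,\ 1\le y\le n\}$, two distinct vertices $u=(u_x,u_y)$, $v=(v_x,v_y)$ being adjacent iff $|u_x-v_x|\le 1$ and $|u_y-v_y|\le 1$. A Hamiltonian $(s,t)$-path is a simple path from $s$ to $t$ visiting every vertex exactly once. *)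

(* Defs.v *)
From mathcomp Require Import all_boot.
Set Implicit Arguments. Unset Strict Implicit. Unset Printing Implicit Defensive.

Definition vertex := (nat * nat)%type.

Definition in_R (m n : nat) (v : vertex) : bool :=
  (1 <= v.1 <= m) && (1 <= v.2 <= n).

Definition sg_adj (u v : vertex) : bool :=
  (u != v) && (maxn u.1 v.1 - minn u.1 v.1 <= 1)
           && (maxn u.2 v.2 - minn u.2 v.2 <= 1).

Definition ham_path (m n : nat) (s t : vertex) (Q : seq vertex) : Prop :=
  [/\ head s Q = s, last s Q = t, uniq Q,
      (forall v, (v \in Q) = in_R m n v) & sorted sg_adj Q].

Definition path_has_edge (Q : seq vertex) (u v : vertex) : bool :=
  has (fun p => (p == (u, v)) || (p == (v, u))) (zip Q (behead Q)).

(* Main.v *)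
Require Import Defs.
From mathcomp Require Import all_boot.
From mathcomp Require Import zify.
Set Implicit Arguments. Unset Strict Implicit. Unset Printing Implicit Defensive.

Lemma adjE (u v : vertex) : sg_adj u v =
  [&& (u.1 != v.1) || (u.2 != v.2), u.1 <= v.1 + 1, v.1 <= u.1 + 1, u.2 <= v.2 + 1 & v.2 <= u.2 + 1].
Proof.
case: u v => [a b] [c d]; rewrite /sg_adj /= xpair_eqE negb_and.
case: (_ || _); rewrite /= ?andbF //;
 have E : forall x y : nat, (maxn x y - minn x y <= 1) = (x <= y + 1) && (y <= x + 1) by move=> x y; apply/idP/idP; lia.
by rewrite !E !andbA.
Qed.

Lemma adjC u v : sg_adj u v = sg_adj v u.
Proof. by rewrite /sg_adj eq_sym (maxnC u.1) (minnC u.1) (maxnC u.2) (minnC u.2). Qed.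

Lemma zip_mem A (a b : vertex) B : (a, b) \in zip (A ++ a :: b :: B) (behead (A ++ a :: b :: B)).
Proof.
elim: A => [|x A IH] /=; first by rewrite inE eqxx.
move: IH; case E: (A ++ a :: b :: B) => [|y L]; first by case: A E.
by move=> /= IH; rewrite inE IH orbT.
Qed.

Lemma has_zip (P : pred (vertex * vertex)) T : has P (zip T (behead T)) ->
  exists A a b B, T = A ++ a :: b :: B /\ P (a, b).
Proof.
elim: T => [|x T IH] //=; case: T IH => [|y T] IH //= /orP [H|H].
  by exists [::], x, y, T.
have [A [a [b [B [E Pab]]]]] := IH H.
by exists (x :: A), a, b, B; rewrite E.
Qed.
Definition hor (n : nat) (a b : vertex) : bool :=
  [&& a.2 == n, b.2 == n & (a.1 + 1 == b.1) || (b.1 + 1 == a.1)].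
Definition HE n (T : seq vertex) :=
  exists A a b B, T = A ++ a :: b :: B /\ hor n a b.
Definition HP n (t : vertex) (T : seq vertex) :=
  [/\ uniq [:: (2,1), (1,1) & T], forall v, (v \in [:: (2,1), (1,1) & T]) = in_R 3 n v,
      path sg_adj (1,1) T & last (1,1) T = t].
Definition valid n (t : vertex) :=
  [&& t != (2,1), t != (1,1) & (n == 2) ==> ((t.1 != 2) && (t != (1,2)))].
Definition grid n : seq vertex := [seq (x,y) | x <- iota 1 3, y <- iota 1 n].
Definition heb n (T : seq vertex) := has (fun p => hor n p.1 p.2) (zip T (behead T)).
Definition checkb n t T :=
  let Q := [:: (2,1), (1,1) & T] in
  [&& uniq Q, all (in_R 3 n) Q, all (fun v => v \in Q) (grid n),
      path sg_adj (1,1) T, last (1,1) T == t & (t.2 < n) ==> heb n T].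

Lemma insert_ok n t T : 2 <= n -> HP n t T -> HE n T -> exists T', HP n.+1 t T' /\ HE n.+1 T'.
Proof.
move=> n2 [Hu Hm Hp Hl] [A [a [b [B [E Hh]]]]]; subst T.
have aR : in_R 3 n a by rewrite -Hm !inE mem_cat inE eqxx /= !orbT.
have bR : in_R 3 n b by rewrite -Hm !inE mem_cat !inE eqxx /= !orbT.
set N := if a.1 < b.1 then [:: (1,n.+1); (2,n.+1); (3,n.+1)] else [:: (3,n.+1); (2,n.+1); (1,n.+1)].
have Nn : forall v, v \in N -> v.2 = n.+1 /\ 1 <= v.1 <= 3.
  by move=> v; rewrite /N; case: ifP => _; rewrite !inE => /or3P [] /eqP -> /=.
have NR : forall v, (v \in N) = [&& v.2 == n.+1 & 1 <= v.1 <= 3].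
  move=> [x y]; rewrite /N; case: ifP => _; rewrite !inE !xpair_eqE /=; apply/idP/idP; lia.
exists (A ++ a :: N ++ b :: B); split; last first.
  rewrite /N; case: ifP => lt.
    exists (rcons A a), (1,n.+1), (2, n.+1), [:: (3,n.+1), b & B]; split; first by rewrite cat_rcons.
    by rewrite /hor /= !eqxx.
  exists (rcons A a), (3,n.+1), (2, n.+1), [:: (1,n.+1), b & B]; split; first by rewrite cat_rcons.
  by rewrite /hor /= !eqxx.
have P : perm_eq [:: (2,1), (1,1) & A ++ a :: N ++ b :: B] (N ++ [:: (2,1), (1,1) & A ++ a :: b :: B]).
  have -> : [:: (2,1), (1,1) & A ++ a :: N ++ b :: B] = [:: (2,1), (1,1) & rcons A a] ++ N ++ b :: B.
    by rewrite /= cat_rcons.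
  by rewrite perm_catCA /= cat_rcons.
split.
- rewrite (perm_uniq P) cat_uniq Hu andbT.
  apply/andP; split; first by rewrite /N; case: ifP.
  apply/hasPn => -[x y]; rewrite Hm NR /in_R /=; lia.
- by move=> [x y]; rewrite (perm_mem P) mem_cat Hm NR /in_R /=; apply/idP/idP; lia.
- move: Hp; rewrite !cat_path /= => /and4P [HA Hla Hab HB]; rewrite HA Hla /=.
  rewrite cat_path /= HB andbT /N.
  move: Hh aR bR; rewrite /hor /in_R; case: a b {Hla Hab Hm Hu Hl Nn NR P N HB} => [x y] [x' y'] /=.
  case: ifP => lt; rewrite /sg_adj /= !xpair_eqE => H1 H2 H3; lia.
- by move: Hl; rewrite !last_cat /= last_cat.
Qed.

Definition sh (v : vertex) : vertex := (v.1, v.2 + 2).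
Definition bshift (T : seq vertex) : seq vertex :=
  [:: (1,2), (2,2), (3,1), (3,2) & map sh [:: (2,1), (1,1) & T]].

Lemma sh_inj : injective sh.
Proof. by move=> [a b] [c d] [-> /eqP]; rewrite eqn_add2r => /eqP ->. Qed.

Lemma sh_adj u v : sg_adj (sh u) (sh v) = sg_adj u v.
Proof. case: u v => [a b] [c d]; rewrite /sg_adj /sh /= !xpair_eqE; apply/idP/idP; lia. Qed.

Lemma shift_ok n t T : HP n t T -> HP n.+2 (sh t) (bshift T) /\ (HE n T -> HE n.+2 (bshift T)).
Proof.
move=> [Hu Hm Hp Hl]; set Q := [:: (2,1), (1,1) & T] in Hu Hm.
set P6 := [:: (2,1); (1,1); (1,2); (2,2); (3,1); (3,2)].
have P6r : all (fun p : vertex => p.2 <= 2) P6 by [].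
split; last first.
  move=> [A [a [b [B [E Hh]]]]].
  exists ([:: (1,2), (2,2), (3,1), (3,2), sh (2,1), sh (1,1) & map sh A]), (sh a), (sh b), (map sh B).
  split; first by rewrite /bshift /Q E /= map_cat.
  by move: Hh; rewrite /hor /=; lia.
have mapQ : forall x y, 3 <= y -> ((x,y) \in map sh Q) = in_R 3 n.+2 (x,y).
  move=> x y y3; have -> : (x,y) = sh (x, y - 2) by rewrite /sh /=; congr pair; lia.
  rewrite (mem_map sh_inj) Hm /in_R /=; apply/idP/idP; lia.
have mapQ2 : forall x y, y <= 2 -> ((x,y) \in map sh Q) = false.
  move=> x y y2; apply/negP => /mapP [[a b] abQ [_ E]].
  by move: abQ; rewrite Hm /in_R /= => ?; lia.
rewrite /HP; have ->: [:: (2,1), (1,1) & bshift T] = P6 ++ map sh Q by [].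
split.
- rewrite cat_uniq (map_inj_uniq sh_inj) Hu andbT; apply/andP; split; first by [].
  apply/hasPn => -[x y] /mapP [[a b] abQ [E1 E2]]; apply/negP => /(allP P6r) /=.
  by move: abQ; rewrite Hm /in_R /= => ?; lia.
- move=> [x y]; rewrite mem_cat.
  case: (leqP y 2) => y2.
    rewrite mapQ2 // orbF.
    case: y y2 => [|[|[|y]]] // _; case: x => [|[|[|[|x]]]] //.
  rewrite mapQ //; case E: ((x,y) \in P6) => //.
  by move/(allP P6r): E => /=; lia.
  rewrite /bshift /Q /= path_map.
  by rewrite (@eq_path _ _ sg_adj) // => u v; rewrite /relpre /= sh_adj.
- by rewrite /bshift /Q /= last_map /= Hl.
Qed.
Definition table : seq ((nat * vertex) * seq vertex) := [:: ((2,(3,1)), [:: (1,2); (2,2); (3,2); (3,1)]);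
 ((2,(3,2)), [:: (1,2); (2,2); (3,1); (3,2)]);
 ((3,(1,2)), [:: (2,2); (3,1); (3,2); (3,3); (2,3); (1,3); (1,2)]);
 ((3,(1,3)), [:: (1,2); (2,2); (3,1); (3,2); (3,3); (2,3); (1,3)]);
 ((3,(2,2)), [:: (1,2); (1,3); (2,3); (3,3); (3,2); (3,1); (2,2)]);
 ((3,(2,3)), [:: (1,2); (1,3); (2,2); (3,1); (3,2); (3,3); (2,3)]);
 ((3,(3,1)), [:: (1,2); (1,3); (2,2); (2,3); (3,3); (3,2); (3,1)]);
 ((3,(3,2)), [:: (1,2); (1,3); (2,3); (3,3); (2,2); (3,1); (3,2)]);
 ((3,(3,3)), [:: (1,2); (1,3); (2,2); (3,1); (3,2); (2,3); (3,3)]);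
 ((4,(1,2)), [:: (2,2); (3,1); (3,2); (2,3); (3,3); (3,4); (2,4); (1,4); (1,3); (1,2)]);
 ((4,(1,3)), [:: (1,2); (2,2); (3,1); (3,2); (2,3); (3,3); (3,4); (2,4); (1,4); (1,3)]);
 ((4,(1,4)), [:: (1,2); (1,3); (2,2); (3,1); (3,2); (2,3); (3,3); (3,4); (2,4); (1,4)]);
 ((4,(2,2)), [:: (1,2); (1,3); (1,4); (2,3); (2,4); (3,4); (3,3); (3,2); (3,1); (2,2)]);
 ((4,(2,3)), [:: (1,2); (1,3); (1,4); (2,4); (3,4); (3,3); (2,2); (3,1); (3,2); (2,3)]);
 ((4,(2,4)), [:: (1,2); (1,3); (1,4); (2,3); (2,2); (3,1); (3,2); (3,3); (3,4); (2,4)]);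
 ((4,(3,1)), [:: (1,2); (1,3); (1,4); (2,3); (2,4); (3,4); (3,3); (2,2); (3,2); (3,1)]);
 ((4,(3,2)), [:: (1,2); (1,3); (1,4); (2,3); (2,4); (3,4); (3,3); (2,2); (3,1); (3,2)]);
 ((4,(3,3)), [:: (1,2); (1,3); (1,4); (2,4); (3,4); (2,3); (2,2); (3,1); (3,2); (3,3)]);
 ((4,(3,4)), [:: (1,2); (1,3); (1,4); (2,3); (2,2); (3,1); (3,2); (3,3); (2,4); (3,4)])].
Definition lookup n t : seq vertex :=
  odflt [::] (ohead [seq e.2 | e <- table & e.1 == (n,t)]).
Lemma base_ok : all (fun n => all (fun t => valid n t ==> checkb n t (lookup n t)) (grid n)) [:: 2; 3; 4].
Proof. by vm_compute. Qed.

Lemma grid_mem n v : in_R 3 n v -> v \in grid n.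
Proof.
case: v => x y; rewrite /in_R /= => H; apply/allpairsP; exists (x,y) => /=.
split => //; last by rewrite mem_iota; lia.
by rewrite !inE; lia.
Qed.

Lemma checkb_ok n t T : checkb n t T -> HP n t T /\ (t.2 < n -> HE n T).
Proof.
case/and5P => Hu /allP HR /allP HG Hp /andP [/eqP Hl Hh]; split.
  split => // v; apply/idP/idP; first exact: HR.
  by move/grid_mem; apply: HG.
move=> lt; move: Hh; rewrite lt /= => /has_zip [A [a [b [B [E H]]]]].
by exists A, a, b, B.
Qed.

Lemma main n t : 2 <= n -> in_R 3 n t -> valid n t -> exists T, HP n t T /\ (t.2 < n -> HE n T).
Proof.
elim/ltn_ind: n t => n IH t n2 tR tv.
case: (leqP n 4) => n4.
  have Hn : n \in [:: 2; 3; 4] by rewrite !inE; lia.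
  move: base_ok => /allP/(_ n Hn)/allP/(_ t (grid_mem tR)); rewrite tv /= => /checkb_ok H.
  by exists (lookup n t).
case: t tR tv => x y tR tv.
case: (leqP (n - 1) y) => ht.
  have [||||T [H1 H2]] := IH (n - 2) _ (x, y - 2).
  - lia.
  - lia.
  - by move: tR; rewrite /in_R /=; lia.
  - rewrite /valid /= !xpair_eqE; have -> : (n - 2 == 2) = false by lia.
    rewrite /=; lia.
  have [H3 H4] := shift_ok H1.
  have En : n = (n - 2).+2 by lia.
  have Et : sh (x, y - 2) = (x, y) by rewrite /sh /=; congr pair; lia.
  exists (bshift T); rewrite En -Et; split => // lt; apply: H4; apply: H2.
  by move: lt; rewrite /=; lia.
have [||||T [H1 H2]] := IH (n - 1) _ (x, y).
- lia.
- lia.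
- by move: tR; rewrite /in_R /=; lia.
- move: tv; rewrite /valid /= !xpair_eqE; have -> : (n - 1 == 2) = false by lia.
  by have -> : (n == 2) = false by lia.
have [|T' [H3 H4]] := insert_ok _ H1 (H2 ltac:(by [])).
  lia.
have En : n = (n - 1).+1 by lia.
by exists T'; rewrite En.
Qed.

Theorem lemma5 (n : nat) (s t : vertex) :
  2 <= n ->
  in_R 3 n s -> in_R 3 n t -> s != t ->
  (* (F1) fails *)
  ~ (n = 2 /\ s.1 = 2 /\ t.1 = 2) ->
  (* (F2) fails *)
  ~ ((n = 2 /\ ((s, t) \in [:: ((1,1),(2,1)); ((2,1),(1,1));
                                ((1,1),(2,2)); ((2,2),(1,1));
                                ((2,1),(1,2)); ((1,2),(2,1))]))
     \/ (3 <= n /\ ((s == (1,1)) && (t == (2,1)) || (s == (2,1)) && (t == (1,1))))) ->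
  (s = (2,1) \/ t = (2,1)) ->
  exists Q : seq vertex, ham_path 3 n s t Q /\ path_has_edge Q (1,1) (2,1).
Proof.
move=> n2 sR tR st F1 F2 [Es|Et].
- subst s.
  have tv : valid n t.
    rewrite /valid eq_sym st /=; apply/andP; split.
      apply/eqP => Et; subst t; apply: F2.
      case: (ltnP n 3) => n3; [left; split; [lia|] | right; split => //].
      by rewrite !inE eqxx !orbT.
    apply/implyP => /eqP En; subst n; apply/andP; split.
      by apply/eqP => Ht; apply: F1.
    by apply/eqP => Et; subst t; apply: F2; left; split => //; rewrite !inE eqxx !orbT.
  have [T [[Hu Hm Hp Hl] _]] := main n2 tR tv.
  exists [:: (2,1), (1,1) & T]; split; first by split => //=; rewrite Hp.
  apply/hasP; exists ((2,1),(1,1)); last by rewrite eqxx orbT.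
  by rewrite /= inE eqxx.
- subst t.
  have sv : valid n s.
    rewrite /valid st /=; apply/andP; split.
      apply/eqP => Es; subst s; apply: F2.
      case: (ltnP n 3) => n3; [left; split; [lia|] | right; split => //].
      by rewrite !inE eqxx.
    apply/implyP => /eqP En; subst n; apply/andP; split.
      by apply/eqP => Hs; apply: F1.
    by apply/eqP => Es; subst s; apply: F2; left; split => //; rewrite !inE eqxx !orbT.
  have [T [[Hu Hm Hp Hl] _]] := main n2 sR sv.
  have ER : rev [:: (2,1), (1,1) & T] = rev T ++ [:: (1,1); (2,1)].
    by rewrite !rev_cons -!cats1 -catA.
  exists (rev [:: (2,1), (1,1) & T]); split.
    split.
    + rewrite ER; case: (lastP T) Hl => [|T' z] /=; first by move=> <-.
      by rewrite rev_rcons last_rcons => <-.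
    + by rewrite ER last_cat.
    + by rewrite rev_uniq.
    + by move=> v; rewrite mem_rev Hm.
    + rewrite rev_sorted (@eq_sorted _ _ sg_adj); first by rewrite /= Hp.
      by move=> u v; rewrite adjC.
  apply/hasP; exists ((1,1),(2,1)); last by rewrite eqxx.
  by rewrite ER zip_mem.
Qed.
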